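(* Let $H$ be a finite group, $H^g$ a subgroup with abelian quotient $\Gamma=H/H^g$. Let $\alpha\in\Gamma$ and let $Y$ be the set of conjugacy classes of $H$ with image $\alpha$ in $\Gamma$. For an irreducible linear representation $\pi$ of $H$, let $\varphi_{\pi}$ be the function $\varphi_{\pi}\,:\,y^{\sharp}\mapsto \operatorname{Tr}\pi(y^{\sharp})$ on the set $H^{\sharp}$ of conjugacy classes of $H$. Consider on functions on $Y$ the inner product $$ \langle f,g\rangle=\frac{1}{|H^g|}\sum_{y^{\sharp}\in Y}{|y^{\sharp}|f(y^{\sharp})\overline{g(y^{\sharp})}}. $$ (1) For $\pi$, $\tau$ irreducible linear representations of $H$, we have $$ \langle \varphi_{\pi},\varphi_{\tau}\rangle = \begin{cases} 0,&\text{if either $\varphi_{\pi}\mid H^g\not=\varphi_{\tau}\mid H^g$ or $\varphi_{\pi}\mid Y=0$,}\\ \overline{\psi(\alpha)}|\hat{\Gamma}^{\pi}|,&\text{ where $\psi\in\hat{\Gamma}$ satisfies $\pi\otimes\psi\simeq\tau$, otherwise}, \end{cases} $$ where $\hat{\Gamma}$ is the group of characters of $\Gamma$ and $\hat{\Gamma}^{\pi}=\{\psi\in\hat{\Gamma}\,\mid\, \pi\simeq\pi\otimes\psi\}$ (in the second case such a $\psi$ exists). (2) Let $\mathcal{B}$ be the family of functions $y^{\sharp}\mapsto \frac{1}{\sqrt{|\hat{\Gamma}^{\pi}|}}\varphi_{\pi}(y^{\sharp})$, restricted to $Y$, where $\pi$ ranges over the subset of a set of representatives for the equivalence relation $\pi\sim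 \tau$ if and only if $\pi\mid H^g\simeq \tau\mid H^g$, consisting of those representatives such that $\varphi_{\pi}\mid Y\not=0$. Then $\mathcal{B}$ is an orthonormal basis of $L^2(Y)$ for the inner product $\langle f,g\rangle=\frac{1}{|H^g|}\sum_{y^{\sharp}\in Y}|y^{\sharp}|f(y^{\sharp})\overline{g(y^{\sharp})}$.
   Context: Representations are complex linear representations of the finite group $H$; a character $\psi$ of $\Gamma=H/H^g$ is viewed as a one-dimensional representation of $H$ via the quotient map; $|y^{\sharp}|$ is the number of elements in the conjugacy class $y^{\sharp}$. *)

(* Defs.v *)
From mathcomp Require Import all_boot all_order all_algebra all_fingroup all_solvable all_field all_character.
Set Implicit Arguments. Unset Strict Implicit. Unset Printing Implicit Defensive.
Import GRing.Theory Num.Theory.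
Local Open Scope ring_scope.

Definition Yclasses (gT : finGroupType) (H Hg : {group gT}) (alpha : coset_of Hg)
  : {set {set gT}} :=
  [set C in classes H | coset Hg (repr C) == alpha].

Definition cls_fun (gT : finGroupType) (H : {group gT}) (phi : 'CF(H))
  : {set gT} -> algC := fun C => phi (repr C).

Definition dotY (gT : finGroupType) (H Hg : {group gT}) (alpha : coset_of Hg)
  (f g : {set gT} -> algC) : algC :=
  (#|Hg|%:R)^-1 * \sum_(C in Yclasses H alpha) #|C|%:R * f C * (g C)^*.

Definition stab_lin (gT : finGroupType) (H Hg : {group gT}) (i : Iirr H)
  : {set Iirr (H / Hg)%g} :=
  [set k : Iirr (H / Hg)%g | 'chi_i * ('chi_k %% Hg)%CF == 'chi_i].

Definition vanishes_on_Y (gT : finGroupType) (H Hg : {group gT}) (alpha : coset_of Hg)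
  (i : Iirr H) : Prop :=
  forall C, C \in Yclasses H alpha -> cls_fun 'chi_i C = 0.

Definition res_repr_set (gT : finGroupType) (H Hg : {group gT}) (R : {set Iirr H}) : Prop :=
  forall i : Iirr H, exists! r, r \in R /\ 'Res[Hg] 'chi_r = 'Res[Hg] 'chi_i.

Definition Bfun (gT : finGroupType) (H Hg : {group gT}) (i : Iirr H) : {set gT} -> algC :=
  fun C => (sqrtC (#|stab_lin Hg i|%:R))^-1 * cls_fun 'chi_i C.

(* Main.v *)
Require Import Defs.
From mathcomp Require Import all_boot all_order all_algebra all_fingroup all_solvable all_field all_character.
From mathcomp Require Import ring.
Set Implicit Arguments. Unset Strict Implicit. Unset Printing Implicit Defensive.
Import GRing.Theory Num.Theory.
Local Open Scope ring_scope.

Section Main.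
Variables (gT : finGroupType) (H N : {group gT}).
Hypotheses (nsNH : (N <| H)%g) (abG : abelian (H / N)%g).

Let nNH : (H \subset 'N(N))%g := normal_norm nsNH.
Let sNH : (N \subset H)%g := normal_sub nsNH.

Lemma coset_conj z h : z \in H -> h \in H -> coset N (z ^ h)%g = coset N z.
Proof.
move=> Hz Hh; rewrite morphJ ?(subsetP nNH) //; apply/conjg_fixP.
apply/commgP; apply: (centsP abG); exact: mem_quotient.
Qed.

Lemma coset_class C x : C \in classes H -> x \in C -> coset N x = coset N (repr C).
Proof.
case/imsetP=> z Hz -> /imsetP[h Hh ->].
have [y Hy ->] := repr_class H z.
by rewrite !coset_conj.
Qed.

Lemma class_sub C : C \in classes H -> (C \subset H)%g.
Proof. by case/imsetP=> z Hz ->; apply: class_subG. Qed.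

Lemma repr_in C : C \in classes H -> repr C \in C.
Proof. by case/imsetP=> z Hz ->; apply: mem_repr (class_refl _ _). Qed.

Lemma sum_Y (g : 'CF(H)) a :
  \sum_(C in Yclasses H a) #|C|%:R * g (repr C) = \sum_(x in H | coset N x == a) g x.
Proof.
have tiY : trivIset (Yclasses H a).
  apply: trivIsetS (partition_trivIset (classes_partition H)).
  by apply/subsetP=> C; rewrite inE => /andP[].
have eqS : forall x, ((x \in H) && (coset N x == a)) = (x \in cover (Yclasses H a)).
  move=> x; apply/andP/bigcupP.
    case=> Hx /eqP ea; exists (x ^: H)%g; last exact: class_refl.
    rewrite inE mem_classes //=; rewrite -(coset_class (mem_classes Hx) (class_refl _ _)) ea //.
  case=> C; rewrite inE => /andP[clC /eqP ea] xC; split.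
    exact: subsetP (class_sub clC) x xC.
  by rewrite (coset_class clC xC) ea.
rewrite (eq_bigl _ _ eqS).
rewrite big_trivIset //; apply: eq_bigr => C; rewrite inE => /andP[clC _].
rewrite -sum1_card natr_sum mulr_suml; apply: eq_bigr => x xC.
rewrite mul1r; case/imsetP: clC xC => z Hz -> /imsetP[h Hh ->].
by rewrite cfun_repr cfunJ.
Qed.

Lemma lin_k (k : Iirr (H / N)) : ('chi_k %% N)%CF \is a linear_char.
Proof. exact: cfMod_lin_char (char_abelianP _ abG k). Qed.

Lemma irr_dot_eq i j (k : Iirr (H / N)) :
  '['chi_i * ('chi_k %% N)%CF, 'chi_j] = ('chi_i * ('chi_k %% N)%CF == 'chi_j)%:R.
Proof.
have : 'chi_i * ('chi_k %% N)%CF \in irr H by rewrite mulrC mul_lin_irr ?lin_k ?mem_irr.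
by case/irrP=> m ->; rewrite cfdot_irr (inj_eq irr_inj).
Qed.

Lemma card_HN : #|H|%:R = #|N|%:R * #|(H / N)%g|%:R :> algC.
Proof. by rewrite -natrM card_quotient // Lagrange. Qed.

Lemma orth_ab y a : y \in (H / N)%g -> a \in (H / N)%g ->
  \sum_(k : Iirr (H / N)) 'chi_k y * ('chi_k a)^* = #|(H / N)%g|%:R * (y == a)%:R.
Proof.
move=> Gy Ga; rewrite second_orthogonality_relation //.
have -> : 'C_(H / N)[y]%g = (H / N)%g.
  apply/setIidPl; apply/subsetP=> g Gg; apply/cent1P; exact: (centsP abG).
have -> : (y \in (a ^: (H / N))%g) = (y == a).
  apply/imsetP/eqP=> [[g Gg ->] | ->]; last by exists 1%g; rewrite ?group1 ?conjg1.
  by apply/conjg_fixP/commgP; apply: (centsP abG).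
by rewrite mulr_natr.
Qed.

Lemma sum_coset i j a : a \in (H / N)%g ->
  \sum_(x in H | coset N x == a) 'chi_i x * ('chi_j x)^*
  = #|N|%:R * \sum_(k : Iirr (H / N)) ('chi_k a)^* * ('chi_i * ('chi_k %% N)%CF == 'chi_j)%:R.
Proof.
move=> Ga.
have nzG : #|(H / N)%g|%:R != 0 :> algC by rewrite pnatr_eq0 -lt0n cardG_gt0.
have nzH : #|H|%:R != 0 :> algC by rewrite pnatr_eq0 -lt0n cardG_gt0.
transitivity (\sum_(x in H) \sum_(k : Iirr (H / N)) #|(H / N)%g|%:R^-1 *
   (('chi_k a)^* * (('chi_i * ('chi_k %% N)%CF) x * ('chi_j x)^*))).
  rewrite big_mkcondr /=; apply: eq_bigr => x Hx.
  rewrite (eq_bigr (fun k : Iirr (H / N) => #|(H / N)%g|%:R^-1 * ('chi_i x * ('chi_j x)^*) *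
       ('chi_k (coset N x) * ('chi_k a)^*))); last first.
    by move=> k _; rewrite cfunE cfModE //; ring.
  rewrite -mulr_sumr orth_ab ?mem_quotient //.
  case: (_ == a); rewrite ?mulr0 // mulr1 [RHS]mulrC mulrA mulfV ?mul1r //.
rewrite exchange_big /= mulr_sumr; apply: eq_bigr => k _.
rewrite -irr_dot_eq cfdotE -!mulr_sumr.
have nzN : #|N|%:R != 0 :> algC by rewrite pnatr_eq0 -lt0n cardG_gt0.
rewrite card_HN; field; by rewrite nzN nzG.
Qed.

Definition S i j a := \sum_(k : Iirr (H / N)) ('chi_k a)^* * ('chi_i * ('chi_k %% N)%CF == 'chi_j)%:R.

Lemma dotY_eq i j a : a \in (H / N)%g ->
  dotY H a (cls_fun 'chi_i) (cls_fun 'chi_j) = S i j a.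
Proof.
move=> Ga; rewrite /dotY /cls_fun.
rewrite (eq_bigr (fun C : {set gT} => #|C|%:R * ('chi_i * ('chi_j)^*%CF) (repr C))); last first.
  by move=> C _; rewrite !cfunE mulrA.
rewrite sum_Y (eq_bigr (fun x => 'chi_i x * ('chi_j x)^*)); last first.
  by move=> x _; rewrite !cfunE.
rewrite sum_coset // mulKf //; by rewrite pnatr_eq0 -lt0n cardG_gt0.
Qed.

Lemma res_mod i (k : Iirr (H / N)) : 'Res[N] ('chi_i * ('chi_k %% N)%CF) = 'Res[N] 'chi_i.
Proof.
apply: cfun_inP => x Nx; rewrite !cfResE // cfunE cfModE ?(subsetP sNH) //.
by rewrite coset_id // lin_char1 ?mulr1 // (char_abelianP _ abG).
Qed.

Lemma res_dot i j :
  '['Res[N] 'chi_i, 'Res[N] 'chi_j] = \sum_(k : Iirr (H / N)) ('chi_i * ('chi_k %% N)%CF == 'chi_j)%:R.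
Proof.
have nzN : #|N|%:R != 0 :> algC by rewrite pnatr_eq0 -lt0n cardG_gt0.
rewrite cfdotE (eq_bigr (fun x => 'chi_i x * ('chi_j x)^*)); last first.
  by move=> x Nx; rewrite !cfResE.
rewrite (eq_bigl (fun x => (x \in H) && (coset N x == 1%g))); last first.
  move=> x; apply/idP/andP=> [Nx | [Hx /eqP c1]].
    by rewrite (subsetP sNH) // coset_id.
  exact: coset_idr (subsetP nNH x Hx) c1.
rewrite sum_coset ?group1 // mulKf //; apply: eq_bigr => k _.
by rewrite lin_char1 ?conjC1 ?mul1r // (char_abelianP _ abG).
Qed.

Lemma card_stab i : #|@stab_lin gT H N i|%:R = '['Res[N] 'chi_i] :> algC.
Proof.
rewrite res_dot -sum1_card natr_sum big_mkcond /=; apply: eq_bigr => k _.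
by rewrite inE; case: (_ == _).
Qed.

Lemma res_nz (i : Iirr H) : '['Res[N] 'chi_i] != 0.
Proof.
rewrite cfnorm_eq0; apply/eqP=> h; move: (irr1_neq0 i).
by rewrite -(cfRes1 N) h cfunE eqxx.
Qed.

Lemma exists_k i j : 'Res[N] 'chi_i = 'Res[N] 'chi_j ->
  exists k : Iirr (H / N), 'chi_i * ('chi_k %% N)%CF = 'chi_j.
Proof.
move=> eqR; case: (pickP (fun k : Iirr (H / N) => 'chi_i * ('chi_k %% N)%CF == 'chi_j)).
  by move=> k /eqP; exists k.
move=> none; have := res_nz i; rewrite {2}eqR res_dot big1 ?eqxx //.
by move=> k _; rewrite none.
Qed.

Lemma part1a (i j : Iirr H) (a : coset_of N) : a \in (H / N)%g ->
  (('Res[N] 'chi_i <> 'Res[N] 'chi_j) \/ vanishes_on_Y a i) ->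
  dotY H a (cls_fun 'chi_i) (cls_fun 'chi_j) = 0.
Proof.
move=> Ga [neR | van].
  rewrite dotY_eq // /S big1 // => k _.
  case: eqP => [ek|_]; last by rewrite mulr0.
  by case: neR; rewrite -ek res_mod.
by rewrite /dotY big1 ?mulr0 // => C YC; rewrite van ?mulr0 ?mul0r.
Qed.

Lemma nonvan_pick (i : Iirr H) (a : coset_of N) : ~ vanishes_on_Y a i ->
  exists2 C, C \in Yclasses H a & 'chi_i (repr C) != 0.
Proof.
move=> nv.
case: (pickP [pred C in Yclasses H a | 'chi_i (repr C) != 0]) => [C /andP[YC nz] | none].
  by exists C.
by case: nv => C YC; move: (none C); rewrite /= YC /= => /negbFE /eqP.
Qed.

Lemma part1b (i j : Iirr H) (a : coset_of N) (k0 : Iirr (H / N)) : a \in (H / N)%g ->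
  'Res[N] 'chi_i = 'Res[N] 'chi_j -> ~ vanishes_on_Y a i ->
  'chi_i * ('chi_k0 %% N)%CF = 'chi_j ->
  dotY H a (cls_fun 'chi_i) (cls_fun 'chi_j) = ('chi_k0 a)^* * #|@stab_lin gT H N i|%:R.
Proof.
move=> Ga eqR nv ek0.
have [C YC nzC] := nonvan_pick nv.
have key k : 'chi_i * ('chi_k %% N)%CF = 'chi_j -> 'chi_k a = 'chi_k0 a.
  move=> ek; move: YC; rewrite inE => /andP[clC /eqP cx].
  have Hx : repr C \in H by apply: subsetP (class_sub clC) _ (repr_in clC).
  have : ('chi_i * ('chi_k %% N)%CF) (repr C) = ('chi_i * ('chi_k0 %% N)%CF) (repr C).
    by rewrite ek ek0.
  by rewrite !cfunE !cfModE // cx => /(mulfI nzC).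
rewrite dotY_eq // /S (eq_bigr (fun k => ('chi_k0 a)^* * ('chi_i * ('chi_k %% N)%CF == 'chi_j)%:R)).
  by rewrite -mulr_sumr -res_dot -eqR card_stab.
by move=> k _; case: eqP => [ek|_]; rewrite ?mulr0 // key.
Qed.

Lemma dotY_scale (a : coset_of N) c d (f g : {set gT} -> algC) :
  dotY H a (fun C => c * f C) (fun C => d * g C) = c * d^* * dotY H a f g.
Proof.
rewrite /dotY mulrCA; congr (_ * _); rewrite mulr_sumr; apply: eq_bigr => C _.
rewrite rmorphM /=; ring.
Qed.

Lemma stab0 (i : Iirr H) : (0 : Iirr (H / N)) \in @stab_lin gT H N i.
Proof. by rewrite inE irr0 cfMod_cfun1 mulr1. Qed.

Lemma sqrt_stab_nz (i : Iirr H) : sqrtC (#|@stab_lin gT H N i|%:R : algC) != 0.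
Proof.
rewrite sqrtC_eq0 pnatr_eq0 -lt0n; apply/card_gt0P; exists 0; exact: stab0.
Qed.

Lemma part2_orth (a : coset_of N) (R : {set Iirr H}) r s : a \in (H / N)%g ->
  res_repr_set N R -> r \in R -> s \in R -> ~ vanishes_on_Y a r -> ~ vanishes_on_Y a s ->
  dotY H a (Bfun N r) (Bfun N s) = (r == s)%:R.
Proof.
move=> Ga HR Rr Rs nvr nvs; rewrite /Bfun dotY_scale.
case: (eqVneq r s) => [<-|neq].
  rewrite (@part1b r r a 0) //; last by rewrite irr0 cfMod_cfun1 mulr1.
  rewrite irr0 cfun1E Ga conjC1 mul1r.
  have nz := sqrt_stab_nz r.
  have ge : 0 <= sqrtC (#|@stab_lin gT H N r|%:R : algC) by rewrite sqrtC_ge0 ler0n.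
  rewrite geC0_conj ?invr_ge0 // -invfM -expr2 sqrtCK mulVf //.
  by rewrite -(sqrtCK (_%:R)) expf_neq0.
rewrite part1a ?mulr0 //; left => eqR.
have [r' [[_ _] uniq]] := HR r.
move/negP: neq; apply; apply/eqP.
by rewrite -(uniq r) ?(uniq s) //.
Qed.

Lemma part2_span (a : coset_of N) (R : {set Iirr H}) : a \in (H / N)%g ->
  res_repr_set N R ->
  forall f : {set gT} -> algC, exists c : Iirr H -> algC,
        forall C, C \in Yclasses H a ->
          f C = \sum_(r in [set r in R | ~~ [forall C in Yclasses H a, cls_fun 'chi_r C == 0]])
                   c r * Bfun N r C.
Proof.
move=> Ga HR f.
set B := [set r in R | _].
pose F : 'CF(H) := \sum_(C in Yclasses H a) f C *: '1_C.
have FE C : C \in Yclasses H a -> F (repr C) = f C.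
  move=> YC; have clC : C \in classes H by move: YC; rewrite inE => /andP[].
  rewrite sum_cfunE (bigD1 C) //= big1 => [|C' /andP[YC' neC']].
    rewrite cfunE; case/imsetP: clC => z Hz Cz; rewrite Cz cfun_classE Hz /=.
    by rewrite -Cz repr_in ?mulr1 ?addr0 // Cz mem_classes.
  have clC' : C' \in classes H by move: YC'; rewrite inE => /andP[].
  rewrite cfunE; case/imsetP: clC' neC' => z Hz ->; rewrite cfun_classE Hz /=.
  have [xz|nxz] := boolP (repr C \in (z ^: H)%g); last by rewrite mulr0.
  move=> neC'; exfalso; move/negP: neC'; apply; apply/eqP.
  have xC : repr C \in C by apply: repr_in.
  case/imsetP: clC xC xz => w Hw -> xw xz.
  by move/class_eqP: xz => <-; move/class_eqP: xw => ->.
pose rep i := odflt i [pick r in R | 'Res[N] 'chi_r == 'Res[N] 'chi_i].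
have repP i : rep i \in R /\ 'Res[N] 'chi_(rep i) = 'Res[N] 'chi_i.
  rewrite /rep; case: pickP => [r /andP[Rr /eqP e] | none] //=.
  have [r [[Rr e] _]] := HR i.
  by move: (none r); rewrite Rr e eqxx.
pose kk i := odflt 0 [pick k : Iirr (H / N) | 'chi_(rep i) * ('chi_k %% N)%CF == 'chi_i].
have kkP i : 'chi_(rep i) * ('chi_(kk i) %% N)%CF = 'chi_i.
  rewrite /kk; case: pickP => [k /eqP //|none] /=.
  have [k ek] := exists_k (repP i).2.
  by move: (none k); rewrite ek eqxx.
exists (fun r => sqrtC (#|@stab_lin gT H N r|%:R) *
          \sum_(i | rep i == r) '[F, 'chi_i] * 'chi_(kk i) a).
move=> C YC; move: (YC); rewrite inE => /andP[clC /eqP cx].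
have Hx : repr C \in H by apply: subsetP (class_sub clC) _ (repr_in clC).
rewrite -FE // {1}(cfun_sum_cfdot F) sum_cfunE.
transitivity (\sum_i '[F, 'chi_i] * 'chi_(kk i) a * 'chi_(rep i) (repr C)).
  by apply: eq_bigr => i _; rewrite cfunE -{2}(kkP i) cfunE cfModE // cx; ring.
rewrite (bigID (fun i => rep i \in B)) /= [X in _ + X]big1 ?addr0; last first.
  move=> i; rewrite inE (repP i).1 /= negbK => /forall_inP/(_ C YC)/eqP.
  by rewrite /cls_fun => ->; rewrite mulr0.
rewrite (partition_big rep (fun r => r \in B)) //=.
apply: eq_bigr => r rB.
have E (s u v : algC) : s != 0 -> u * v = (s * u) * (s^-1 * v).
  by move=> nzs; field.
rewrite /Bfun /cls_fun -E ?sqrt_stab_nz // mulr_suml.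
apply: eq_big => [i | i /andP[_ /eqP ->]] //.
by case: eqP => [->|]; rewrite ?rB ?andbF.
Qed.
End Main.

Unset Implicit Arguments.
Set Strict Implicit.
Set Printing Implicit Defensive.

Theorem lemma6p1 (gT : finGroupType) (H Hg : {group gT}) (alpha : coset_of Hg)
  (nHgH : (Hg <| H)%g) (abGamma : abelian (H / Hg)%g) (alphaG : alpha \in (H / Hg)%g) :
  (* (1) *)
  (forall i j : Iirr H,
     ((('Res[Hg] 'chi_i <> 'Res[Hg] 'chi_j) \/ vanishes_on_Y alpha i) ->
        dotY H alpha (cls_fun 'chi_i) (cls_fun 'chi_j) = 0)
     /\
     (('Res[Hg] 'chi_i = 'Res[Hg] 'chi_j /\ ~ vanishes_on_Y alpha i) ->
        (exists k : Iirr (H / Hg)%g, 'chi_i * ('chi_k %% Hg)%CF = 'chi_j) /\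
        (forall k : Iirr (H / Hg)%g, 'chi_i * ('chi_k %% Hg)%CF = 'chi_j ->
           dotY H alpha (cls_fun 'chi_i) (cls_fun 'chi_j)
           = ('chi_k alpha)^* * #|stab_lin Hg i|%:R)))
  /\
  (* (2) *)
  (forall R : {set Iirr H}, res_repr_set Hg R ->
     let B := [set r in R | ~~ [forall C in Yclasses H alpha, cls_fun 'chi_r C == 0]] in
     (forall r s, r \in B -> s \in B ->
        dotY H alpha (Bfun Hg r) (Bfun Hg s) = (r == s)%:R)
     /\
     (forall f : {set gT} -> algC, exists c : Iirr H -> algC,
        forall C, C \in Yclasses H alpha ->
          f C = \sum_(r in B) c r * Bfun Hg r C)).
Proof.
split.
  move=> i j; split; first exact: part1a.
  case=> eqR nv; split; first exact: exists_k.
  by move=> k ek; apply: part1b.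
move=> R HR B; split; last exact: part2_span.
have nvB r : r \in B -> r \in R /\ ~ vanishes_on_Y alpha r.
  rewrite inE => /andP[Rr nv]; split => // van; move/negP: nv; apply.
  by apply/forall_inP => C YC; rewrite van.
move=> r s /nvB[Rr nvr] /nvB[Rs nvs].
exact: part2_orth.
Qed.
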